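(* (a) If $Y,Z$ are CFG-spaces contained (as metric subspaces) in a metric space $X$ over a Boolean ring $B$, then $Y\cap Z$ is a CFG-space. (b) If $f:X\to Y$ is a contractive map between CFG-spaces over $B$ and $Z\subseteq Y$ is a CFG-space, then $f^{-1}(Z)$ is a CFG-space.
   Context: $B$ is a Boolean ring ($a\vee b=a+b+ab$, $a\le b\iff ab=a$; $a_1\oplus\cdots\oplus a_n$ denotes a sum of pairwise disjoint elements). A Boolean metric space over $B$: set $X$ with $d:X\times X\to B$, $d(x,y)=0\iff x=y$, symmetric, $d(x,z)\le d(x,y)\vee d(y,z)$; subsets carry the restricted metric. For $x_1,\dots,x_n\in X$, $a_i\in B$ with $a_1\oplus\cdots\oplus a_n=1$, $x$ is a convex combination of the $x_i$ with coefficients $a_i$ if $a_id(x,x_i)=0$ for all $i$. A CFG-space is a space in which all such combinations exist and every element is a convex combination of elements of some fixed finite subset (the empty space counts). A map $f$ is contractive if $d(f(x),f(y))\le d(x,y)$. *)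

(* Defs.v *)
From HB Require Import structures.
From mathcomp Require Import all_boot all_order all_algebra.
Set Implicit Arguments. Unset Strict Implicit. Unset Printing Implicit Defensive.
Import GRing.Theory.
Local Open Scope ring_scope.

Definition boolean_ring (B : pzRingType) : Prop := forall a : B, a * a = a.

Definition bjoin (B : pzRingType) (a b : B) : B := a + b + a * b.
Definition ble (B : pzRingType) (a b : B) : Prop := a * b = a.

Definition bmetric (B : pzRingType) (X : Type) (d : X -> X -> B) : Prop :=
  (forall x y, d x y = 0 <-> x = y) /\
  (forall x y, d x y = d y x) /\
  (forall x y z, ble (d x z) (bjoin (d x y) (d y z))).

(* a_1 (+) ... (+) a_n = 1 : pairwise disjoint elements summing to 1
   (for disjoint elements the join equals the ring sum). *)
Definition part_unity (B : pzRingType) (n : nat) (a : 'I_n -> B) : Prop :=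
  (forall i j : 'I_n, i != j -> a i * a j = 0) /\ \sum_(i < n) a i = 1.

Definition convex_comb (B : pzRingType) (X : Type) (d : X -> X -> B)
  (x : X) (n : nat) (xs : 'I_n -> X) (a : 'I_n -> B) : Prop :=
  forall i : 'I_n, a i * d x (xs i) = 0.

Definition CFG (B : pzRingType) (X : Type) (d : X -> X -> B) (Y : X -> Prop) : Prop :=
  (forall x, ~ Y x) \/
  ((forall (n : nat) (xs : 'I_n -> X) (a : 'I_n -> B),
      (forall i, Y (xs i)) -> part_unity a ->
      exists x, Y x /\ convex_comb d x xs a) /\
   (exists (m : nat) (g : 'I_m -> X),
      (forall k, Y (g k)) /\
      forall y, Y y ->
        exists (n : nat) (xs : 'I_n -> X) (a : 'I_n -> B),
          (forall i, exists k, xs i = g k) /\ part_unity a /\ convex_comb d y xs a)).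

Definition contractive (B : pzRingType) (X Y : Type) (dX : X -> X -> B) (dY : Y -> Y -> B)
  (f : X -> Y) : Prop :=
  forall x x', ble (dY (f x) (f x')) (dX x x').

(* Main.v *)
Require Import Defs.
From mathcomp Require Import all_boot all_order all_algebra.
From Stdlib Require Import FunctionalExtensionality PropExtensionality Classical.
Import GRing.Theory.
Local Open Scope ring_scope.

Section Aux.
Variable B : pzRingType.
Hypothesis HB : boolean_ring B.

Lemma two0 (a : B) : a + a = 0.
Proof.
have H := HB (a + a); rewrite mulrDl !mulrDr !HB in H.
have: (a + a) + (a + a) - (a + a) = a + a by rewrite addrK.
by rewrite H subrr.
Qed.

Lemma bcomm (a b : B) : a * b = b * a.
Proof.
have H := HB (a + b); rewrite mulrDl !mulrDr !HB in H.
have E : a * b + b * a = 0.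
  have: a * b + b * a + (a + b) - (a + b) = (a + b) - (a + b).
    congr (_ - _); rewrite -[RHS]H.
    by rewrite addrACA [a + _]addrC addrA.
  by rewrite addrK subrr.
move/eqP: E; rewrite addr_eq0 => /eqP ->.
by rewrite -[LHS]addr0 -(two0 (b * a)) addrA addNr add0r.
Qed.

Lemma ble_zero (c x y : B) : ble x y -> c * y = 0 -> c * x = 0.
Proof. by rewrite /ble => Hxy Hc; rewrite -Hxy (bcomm x y) mulrA Hc mul0r. Qed.

Lemma join_zero (c u v : B) : c * u = 0 -> c * v = 0 -> c * bjoin u v = 0.
Proof.
by move=> Hu Hv; rewrite /bjoin !mulrDr Hu Hv mulrA Hu !mul0r !addr0.
Qed.

Lemma mul_zeroL (e c y : B) : c * y = 0 -> (e * c) * y = 0.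
Proof. by move=> H; rewrite -mulrA H mulr0. Qed.

Lemma mul_zeroR (e c y : B) : c * y = 0 -> (c * e) * y = 0.
Proof. by move=> H; rewrite (bcomm c e); apply: mul_zeroL. Qed.

Variable X : Type.
Variable d : X -> X -> B.
Hypothesis Hd : bmetric d.

Lemma tri0 {c : B} {x y z} : c * d x y = 0 -> c * d y z = 0 -> c * d x z = 0.
Proof.
case: Hd => _ [_ Ht] H1 H2; apply: ble_zero (Ht x y z) _.
exact: join_zero.
Qed.

Lemma sym0 {c : B} {x y} : c * d x y = 0 -> c * d y x = 0.
Proof. by case: Hd => _ [Hs _]; rewrite Hs. Qed.

Lemma uniq2 (c : B) p q x y :
  c * d x p = 0 -> (1 - c) * d x q = 0 ->
  c * d y p = 0 -> (1 - c) * d y q = 0 -> x = y.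
Proof.
move=> H1 H2 H3 H4; case: Hd => [Hz _]; apply/Hz.
have -> : d x y = c * d x y + (1 - c) * d x y by rewrite -mulrDl addrC subrK mul1r.
rewrite (tri0 H1 (sym0 H3)) (tri0 H2 (sym0 H4)) addr0 //.
Qed.

Lemma uniqn n (xs : 'I_n -> X) (a : 'I_n -> B) x y :
  part_unity a -> convex_comb d x xs a -> convex_comb d y xs a -> x = y.
Proof.
move=> [_ Hs] Hx Hy; case: Hd => [Hz _]; apply/Hz.
rewrite -[d x y]mul1r -Hs mulr_suml big1 // => i _.
exact: tri0 (Hx i) (sym0 (Hy i)).
Qed.

Definition closedP (P : X -> Prop) :=
  forall (n : nat) (xs : 'I_n -> X) (a : 'I_n -> B),
      (forall i, P (xs i)) -> part_unity a ->
      exists x, P x /\ convex_comb d x xs a.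

Lemma glue2 (P : X -> Prop) : closedP P -> forall (c : B) p q, P p -> P q ->
  exists x, P x /\ c * d x p = 0 /\ (1 - c) * d x q = 0.
Proof.
move=> cl c p q Pp Pq.
have [||x [Px Hx]] := cl 2 (fun i => if i == ord0 then p else q)
    (fun i => if i == ord0 then c else 1 - c).
- by move=> i; case: ifP.
- split.
  + move=> [[|[|i]] Hi] // [[|[|j]] Hj] //= _.
    * by rewrite mulrBr mulr1 HB subrr.
    * by rewrite mulrBl mul1r HB subrr.
  + by rewrite big_ord_recr big_ord1 /= addrC subrK.
exists x; split => //; split.
- by have := Hx ord0.
- by have := Hx ord_max.
Qed.
End Aux.

Arguments two0 {B} HB a.
Arguments bcomm {B} HB a b.
Arguments tri0 {B} HB {X d} Hd {c x y z}.
Arguments sym0 {B X d} Hd {c x y}.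
Arguments uniq2 {B} HB {X d} Hd {c p q x y}.
Arguments uniqn {B} HB {X d} Hd {n xs a x y}.
Arguments glue2 {B} HB {X d P} _ c {p q}.
Arguments ble_zero {B} HB {c x y}.
Arguments mul_zeroL {B} e {c y}.
Arguments mul_zeroR {B} HB e {c y}.

Lemma main_gen (B : pzRingType) (HB : boolean_ring B) (X Y : Type) (dX : X -> X -> B)
  (dY : Y -> Y -> B) (f : X -> Y) (P : X -> Prop) (Z : Y -> Prop) :
  bmetric dX -> bmetric dY -> contractive dX dY f -> CFG dX P -> CFG dY Z ->
  CFG dX (fun x => P x /\ Z (f x)).
Proof.
move=> HX HY Hf CP CZ.
have cf : forall c x x', c * dX x x' = 0 -> c * dY (f x) (f x') = 0.
  move=> c x x' H; have := ble_zero HB (Hf x x') H.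
  by [].
case: (classic (exists w, P w /\ Z (f w))) => [[w [Pw Zw]]|Hne]; last first.
  by left => x Hx; apply: Hne; exists x.
case: CP => [/(_ w Pw)//|[clP [m [g [gP genP]]]]].
case: CZ => [/(_ _ Zw)//|[clZ [p [h [hZ genZ]]]]].
right; split.
- move=> n xs a Hxs Ha.
  have [x [Px Hx]] := clP n xs a (fun i => proj1 (Hxs i)) Ha.
  have [z [Zz Hz]] := clZ n (fun i => f (xs i)) a (fun i => proj2 (Hxs i)) Ha.
  exists x; split => //; split => //.
  suff -> : f x = z by [].
  apply: (uniqn HB HY Ha) Hz => i; exact: cf (Hx i).
- pose T := (('I_m * 'I_p)%type)%type.
  pose cc (t : ('I_m * 'I_p)%type) := 1 - dY (f (g t.1)) (h t.2).
  have Hu : forall t : ('I_m * 'I_p)%type, exists u, P u /\ cc t * dX u (g t.1) = 0 /\ (1 - cc t) * dX u w = 0.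
    by move=> t; apply: (glue2 HB clP).
  have [u Hu'] := fin_all_exists Hu.
  have uP : forall t, P (u t) /\ Z (f (u t)).
    move=> t; have [Pu [H1 H2]] := Hu' t; split => //.
    have [z [Zz [Hz1 Hz2]]] := glue2 HB clZ (cc t) (hZ t.2) Zw.
    suff -> : f (u t) = z by [].
    apply: (uniq2 HB HY _ _ Hz1 Hz2).
    + apply: (tri0 HB HY (cf _ _ _ H1)).
      by rewrite /cc mulrBl mul1r HB subrr.
    + exact: cf _ _ _ H2.
  exists #|{: ('I_m * 'I_p)%type}|, (fun k => u (enum_val k)); split; first by move=> k; apply: uP.
  move=> x [Px Zx].
  have [n1 [xs1 [a1 [Hg1 [Ha1 Hc1]]]]] := genP x Px.
  have [n2 [xs2 [b [Hg2 [Hb Hc2]]]]] := genZ (f x) Zx.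
  have [kk Hkk] := fin_all_exists Hg1.
  have [ll Hll] := fin_all_exists Hg2.
  exists #|{: ('I_n1 * 'I_n2)%type}|, (fun i => u (kk (enum_val i).1, ll (enum_val i).2)),
    (fun i => a1 (enum_val i).1 * b (enum_val i).2).
  split; [|split].
  + move=> i; exists (enum_rank (kk (enum_val i).1, ll (enum_val i).2)).
    by rewrite enum_rankK.
  + split.
    * move=> i j Hij.
      have : enum_val i != enum_val j by apply: contra Hij => /eqP /enum_val_inj ->.
      case: (enum_val i) => i1 i2; case: (enum_val j) => j1 j2 /= Hne.
      have -> : a1 i1 * b i2 * (a1 j1 * b j2) = (a1 i1 * a1 j1) * (b i2 * b j2).
        by rewrite -!mulrA; congr (_ * _); rewrite !mulrA (bcomm HB (b i2) (a1 j1)).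
      case: (i1 =P j1) => [e|ne].
      - subst j1; rewrite (proj1 Hb i2 j2) ?mulr0 //.
        by apply: contra Hne => /eqP ->.
      - by rewrite (proj1 Ha1 i1 j1) ?mul0r //; apply/eqP.
    * have := big_enum_val (op := +%R) (A := {: ('I_n1 * 'I_n2)%type}) (fun s : ('I_n1 * 'I_n2)%type => a1 s.1 * b s.2).
      rewrite /= => <-.
      rewrite (eq_bigl predT) //= -(pair_bigA _ (fun i j => a1 i * b j)) /=.
      under eq_bigr => i _ do rewrite -big_distrr /=.
      by rewrite -big_distrl /= (proj2 Ha1) (proj2 Hb) mulr1.

  + move=> i; case E : (enum_val i) => [i1 i2] /=.
    set k := kk i1; set l := ll i2.
    have [_ [H1 _]] := Hu' (k, l); rewrite /= in H1.
    have A1 : a1 i1 * dX x (g k) = 0 by rewrite /k -Hkk; exact: Hc1 i1.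
    have B1 : b i2 * dY (f x) (h l) = 0 by rewrite /l -Hll; exact: Hc2 i2.
    have E1 : a1 i1 * b i2 * dY (f (g k)) (h l) = 0.
      exact: (tri0 HB HY (sym0 HY (cf _ _ _ (mul_zeroR HB (b i2) A1))) (mul_zeroL (a1 i1) B1)).
    have E2 : a1 i1 * b i2 * cc (k, l) = a1 i1 * b i2.
      by rewrite /cc mulrBr mulr1 E1 subr0.
    apply: (tri0 HB HX (mul_zeroR HB (b i2) A1)).
    rewrite -E2; exact: (mul_zeroL (a1 i1 * b i2) (sym0 HX H1)).
Qed.

Theorem mainTheorem8 (B : pzRingType) (HB : boolean_ring B) :
  (forall (X : Type) (d : X -> X -> B) (Y Z : X -> Prop),
     bmetric d -> CFG d Y -> CFG d Z -> CFG d (fun x => Y x /\ Z x)) /\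
  (forall (X Y : Type) (dX : X -> X -> B) (dY : Y -> Y -> B) (f : X -> Y) (Z : Y -> Prop),
     bmetric dX -> bmetric dY ->
     CFG dX (fun _ => True) -> CFG dY (fun _ => True) ->
     contractive dX dY f -> CFG dY Z ->
     CFG dX (fun x => Z (f x))).
Proof.
split.
- move=> X d Y Z Hd CY CZ.
  apply: (@main_gen B HB X X d d id Y Z Hd Hd _ CY CZ).
  by move=> x x'; rewrite /ble HB.
- move=> X Y dX dY f Z HX HY CX _ Hf CZ.
  have := @main_gen B HB X Y dX dY f (fun _ => True) Z HX HY Hf CX CZ.
  have -> : (fun x => True /\ Z (f x)) = (fun x => Z (f x)).
    by apply: functional_extensionality => x; apply: propositional_extensionality; tauto.
  by [].
Qed.
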